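(* Let $M$ be a minimal dominating set of a finite tree $T$, let $X\subseteq N_2(M)$, and let $A_2=N(X)\cap a_2(M)$. Suppose that $A_2\cup X$ induces a connected subtree of $T$ and that $X$ is an independent set in $T$. Then Algorithm 2 (described below), applied to $T$, $M$ and $X$, terminates with a minimal dominating set $M'$ of $T$ satisfying $|M'|\ge |M|-|A_2|+|X|$. Algorithm 2: set $A=N(X)\cap a(M)$, $A_2=N(X)\cap a_2(M)$, $N=N(A)\cap N_1(M)$, and $M'=((M\cup X)\setminus A)\cup N$. Then for each $x\in X$ in turn: root $T$ at $x$; let $T_x$ be the subtree of $T$ obtained by removing the vertices of $A_2$ together with all their descendants (with respect to the root $x$); let $M'_x=M'\cap V(T_x)$; let $M''_x$ be the output of Algorithm 1 applied to $T_x$ rooted at $x$ and the set $M'_x$; replace $M'$ by $(M'\setminus M'_x)\cup M''_x$. Finally return $M'$. Algorithm 1 (input: a finite tree rooted at a vertex and a dominating set $M_0$ of it): set $i=0$; while $M_i$ is not a minimal dominating set: choose a supported vertex $u_i\in M_i\setminus a(M_i)$ of least depth; let $A_{i+1}$ be the set of vertices of $a_1(M_i)$ adjacent to $u_i$; let $N_{i+1}$ be the set of vertices of $N_1(M_i)$ adjacent to a vertex of $A_{i+1}$; set $M_{i+1}=(M_i\setminus A_{i+1})\cup N_{i+1}$ and increase $i$ by one. When the loop ends, return $M_i$.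
   Context: A dominating set of a graph $G=(V,E)$ is a set $S\subseteq V$ such that every vertex is in $S$ or adjacent to a vertex of $S$; it is minimal if no proper subset is dominating. $N(u)$ and $N[u]=N(u)\cup\{u\}$ are open/closed neighbourhoods; $N(X)=\bigcup_{x\in X}N(x)$. For a dominating set $S$ (of the relevant tree): $a(S)=\{u\in S: S\setminus\{u\}\text{ is not dominating}\}$ (critical vertices); vertices of $S\setminus a(S)$ are supported; $N_1(S)=\{u\in V\setminus S: |N[u]\cap S|=1\}$; $N_2(S)=\{u\in V\setminus S: |N[u]\cap S|\ge 2\}$; $a_1(S)=\{u\in a(S): N[u]\cap N_1(S)\ne\emptyset\}$; $a_2(S)=\{u\in a(S): N[u]\cap N_1(S)=\emptyset\}$. In a rooted tree, depth is distance to the root and $y$ is a descendant of $z$ if $z$ lies on the path from $y$ to the root. *)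

(* Defs.v *)
From mathcomp Require Import all_boot.
From mathcomp Require Import boolp.
Set Implicit Arguments. Unset Strict Implicit. Unset Printing Implicit Defensive.

Section Graph.
Variables (T : finType) (e : rel T).

Definition simple_graph := symmetric e /\ irreflexive e.
Definition connected_graph := forall x y : T, connect e x y.
Definition acyclic := forall p : seq T, uniq p -> 3 <= size p -> ~~ cycle e p.
Definition is_tree := [/\ simple_graph, connected_graph & acyclic].

Definition induced_connected (U : {set T}) :=
  forall x y, x \in U -> y \in U ->
    connect (fun a b => [&& e a b, a \in U & b \in U]) x y.
Definition independent (U : {set T}) :=
  forall x y, x \in U -> y \in U -> ~~ e x y.

Definition nbhd (X : {set T}) : {set T} := [set v | [exists x in X, e x v]].
Definition cnbhd (u : T) : {set T} := [set w | (w == u) || e u w].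

(* ---------- domination in the subgraph induced by a vertex set S ---------- *)
Definition dominating (S D : {set T}) : bool :=
  (D \subset S) && [forall v in S, (v \in D) || [exists u in D, e u v]].
Definition minimal_dominating (S D : {set T}) : bool :=
  dominating S D && [forall D' : {set T}, (D' \proper D) ==> ~~ dominating S D'].

Definition crit (S D : {set T}) : {set T} := [set u in D | ~~ dominating S (D :\ u)].
Definition supported (S D : {set T}) : {set T} := D :\: crit S D.
Definition N1 (S D : {set T}) : {set T} := [set u in S :\: D | #|cnbhd u :&: D| == 1].
Definition N2 (S D : {set T}) : {set T} := [set u in S :\: D | 2 <= #|cnbhd u :&: D|].
Definition a1 (S D : {set T}) : {set T} :=
  [set u in crit S D | [exists w in N1 S D, w \in cnbhd u]].
Definition a2 (S D : {set T}) : {set T} :=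
  [set u in crit S D | [disjoint cnbhd u & N1 S D]].

Fixpoint ball (S : {set T}) (r : T) (k : nat) : {set T} :=
  match k with
  | 0 => [set r]
  | k.+1 => ball S r k :|: (S :&: nbhd (ball S r k))
  end.
Definition depth (S : {set T}) (r v : T) : nat :=
  find (fun k => v \in ball S r k) (iota 0 #|T|.+1).

Definition descendant (r z y : T) : Prop :=
  exists p : seq T, [&& path e y p, last y p == r, uniq (y :: p) & z \in y :: p].

Definition alg1_step (S : {set T}) (r : T) (M M' : {set T}) : Prop :=
  ~~ minimal_dominating S M /\
  exists u, [/\ u \in supported S M,
    (forall w, w \in supported S M -> depth S r u <= depth S r w) &
    let A := [set a in a1 S M | e a u] in
    let Nn := [set v in N1 S M | [exists a in A, e a v]] in
    M' = (M :\: A) :|: Nn].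

Inductive star (R : {set T} -> {set T} -> Prop) : {set T} -> {set T} -> Prop :=
  | star_refl M : star R M M
  | star_step M M' M'' : R M M' -> star R M' M'' -> star R M M''.

(* every run of Algorithm 1 from M0 terminates: no infinite run, and the loop
   body can always be executed while the loop condition holds *)
Definition alg1_terminates (S : {set T}) (r : T) (M0 : {set T}) : Prop :=
  Acc (fun b a => alg1_step S r a b) M0 /\
  forall M, star (alg1_step S r) M0 M -> ~~ minimal_dominating S M ->
    exists M', alg1_step S r M M'.

Definition alg1_out (S : {set T}) (r : T) (M0 Mout : {set T}) : Prop :=
  star (alg1_step S r) M0 Mout /\ minimal_dominating S Mout.

Definition alg2_A (M X : {set T}) := nbhd X :&: crit setT M.
Definition alg2_A2 (M X : {set T}) := nbhd X :&: a2 setT M.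
Definition alg2_N (M X : {set T}) := nbhd (alg2_A M X) :&: N1 setT M.
Definition alg2_init (M X : {set T}) : {set T} :=
  ((M :|: X) :\: alg2_A M X) :|: alg2_N M X.

Definition Tsub (A2 : {set T}) (x : T) : {set T} :=
  [set v | ~~ `[< exists a, a \in A2 /\ descendant x a v >]].

(* all calls to Algorithm 1 terminate, processing X in the order s *)
Fixpoint alg2_ok (A2 : {set T}) (M' : {set T}) (s : seq T) : Prop :=
  match s with
  | [::] => True
  | x :: s' =>
      alg1_terminates (Tsub A2 x) x (M' :&: Tsub A2 x) /\
      forall M'', alg1_out (Tsub A2 x) x (M' :&: Tsub A2 x) M'' ->
        alg2_ok A2 ((M' :\: (M' :&: Tsub A2 x)) :|: M'') s'
  end.

Fixpoint alg2_out (A2 : {set T}) (M' : {set T}) (s : seq T) (Mf : {set T}) : Prop :=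
  match s with
  | [::] => Mf = M'
  | x :: s' =>
      exists M'', alg1_out (Tsub A2 x) x (M' :&: Tsub A2 x) M'' /\
        alg2_out A2 ((M' :\: (M' :&: Tsub A2 x)) :|: M'') s' Mf
  end.

End Graph.

(* Main.v *)
Require Import Defs.
From mathcomp Require Import all_boot.
From mathcomp Require Import boolp zify.
Set Implicit Arguments. Unset Strict Implicit. Unset Printing Implicit Defensive.

Section Tree.
Variables (T : finType) (e : rel T).
Hypothesis esym : symmetric e.
Hypothesis eirr : irreflexive e.
Hypothesis econn : connected_graph e.
Hypothesis eacyc : acyclic e.

Definition upath (a : T) (p : seq T) (b : T) :=
  [&& path e a p, last a p == b & uniq (a :: p)].

Lemma last_rev_belast (v : T) p : last (last v p) (rev (belast v p)) = v.
Proof.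
have H : rev (v :: p) = last v p :: rev (belast v p).
  by rewrite {1}lastI rev_rcons.
by rewrite -[RHS](last_rcons v (rev p)) -rev_cons H.
Qed.

Lemma path_rev (v : T) p : path e v p -> path e (last v p) (rev (belast v p)).
Proof.
rewrite rev_path => H; apply: sub_path H => x y /=; by rewrite esym.
Qed.

Lemma upath_rev a p b : upath a p b -> upath b (rev (belast a p)) a.
Proof.
case/and3P=> Hp /eqP Hl Hu; apply/and3P; split.
- by rewrite -Hl; apply: path_rev.
- by rewrite -{1}Hl last_rev_belast.
- have H : rev (a :: p) = last a p :: rev (belast a p).
    by rewrite {1}lastI rev_rcons.
  by rewrite -Hl -H rev_uniq.
Qed.

Lemma join (v : T) p q : path e v p -> path e v q ->
  exists s, upath (last v p) s (last v q) /\ {subset s <= v :: p ++ q}.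
Proof.
move=> Hp Hq.
set W := rev (belast v p) ++ q.
have HW : path e (last v p) W.
  by rewrite cat_path path_rev // last_rev_belast.
have HL : last (last v p) W = last v q by rewrite /W last_cat last_rev_belast.
rewrite -HL.
case: (shortenP HW) => s Hs Hu Hsub.
exists s; split.
  by apply/and3P; split.
move=> z /Hsub; rewrite mem_cat mem_rev => /orP [/mem_belast|].
  by rewrite !inE mem_cat => /orP [->|->]; rewrite ?orbT.
by rewrite inE mem_cat => ->; rewrite !orbT.
Qed.

Lemma upath_uniq a p q b : upath a p b -> upath a q b -> p = q.
Proof.
elim: p a q => [|p1 p IH] a q.
  case/and3P=> _ /= /eqP <- _; case: q => [//|q1 q] /and3P [_ /eqP Hl Hu].
  move: Hu => /= /andP [H _]; case/negP: H.
  by rewrite -{1}Hl /= mem_last.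
case: q => [|q1 q].
  case/and3P=> _ /eqP Hl Hu /and3P [_ /= /eqP Ha _]; rewrite -Ha in Hl.
  move: Hu => /= /andP [H _]; case/negP: H.
  by rewrite -{1}Hl /= mem_last.
move=> Hp Hq.
case: (eqVneq p1 q1) => [E|Nq].
  subst q1; congr cons; apply: (IH p1).
    by case/and3P: Hp => /= /andP [_ ?] ? /andP [_ ?]; apply/and3P.
  by case/and3P: Hq => /= /andP [_ ?] ? /andP [_ ?]; apply/and3P.
exfalso.
case/and3P: Hp => /= /andP [ap1 Pp] /eqP Lp /andP [anp Up].
case/and3P: Hq => /= /andP [aq1 Pq] /eqP Lq /andP [anq Uq].
have Rp := path_rev Pp; have Rq := path_rev Pq.
rewrite Lp in Rp; rewrite Lq in Rq.
case: (join Rp Rq) => s [/and3P [Ps /eqP Ls Us] Ssub].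
have E1 : last b (rev (belast p1 p)) = p1 by rewrite -{1}Lp last_rev_belast.
have E2 : last b (rev (belast q1 q)) = q1 by rewrite -{1}Lq last_rev_belast.
rewrite E1 E2 in Ps Ls Us.
have ans : a \notin s.
  apply/negP => /Ssub; rewrite inE mem_cat !mem_rev => /orP [/eqP Eb|/orP [/mem_belast|/mem_belast]].
  - by move: anp; rewrite Eb -Lp mem_last.
  - by move/negP: anp.
  - by move/negP: anq.
have s0 : s != [::] by case: (s) Ls Nq => [/= ->|]; rewrite ?eqxx.
have C : cycle e [:: a, p1 & s] by rewrite /= ap1 rcons_path Ps Ls esym aq1.
have U3 : uniq [:: a, p1 & s].
  rewrite cons_uniq Us andbT inE negb_or ans andbT.
  by apply/negP => /eqP E; move: anp; rewrite -E inE eqxx.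
have S3 : 3 <= size [:: a, p1 & s] by case: (s) s0.
by move: (eacyc U3 S3); rewrite C.
Qed.

Lemma upath_ex a b : exists p, upath a p b.
Proof.
case/connectP: (econn a b) => p Hp ->.
case: (shortenP Hp) => s Hs Hu _; exists s; by apply/and3P; split.
Qed.

Lemma upath_in (U : {set T}) a b : induced_connected e U -> a \in U -> b \in U ->
  exists p, upath a p b /\ {subset p <= U}.
Proof.
move=> HU aU bU; case/connectP: (HU a b aU bU) => p Hp ->.
case: (shortenP Hp) => s Hs Hu _; exists s; split.
  apply/and3P; split => //.
  by apply: sub_path Hs => x y /and3P [].
elim: s a Hs {Hu aU Hp} => [//|y s IH] a /= /andP [/and3P [_ _ yU] Hs] z.
by rewrite inE => /orP [/eqP ->//|zs]; exact: (IH _ Hs z zs).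
Qed.

Definition Par (r v w : T) := e v w /\ exists p, upath w p r /\ v \notin w :: p.

Lemma Par_root r w : ~ Par r r w.
Proof. by case=> _ [p [/and3P [_ /eqP <- _]]]; rewrite mem_last. Qed.

Lemma Par_uniq r v w1 w2 : Par r v w1 -> Par r v w2 -> w1 = w2.
Proof.
case=> e1 [p1 [/and3P [P1 L1 U1] N1]] [e2 [p2 [/and3P [P2 L2 U2] N2]]].
have H : w1 :: p1 = w2 :: p2.
  apply: (@upath_uniq v _ _ r); apply/and3P; split => //=; by apply/andP.
by case: H.
Qed.

Lemma Par_edge r v w : e v w -> Par r v w \/ Par r w v.
Proof.
move=> evw; case: (upath_ex w r) => p Hp.
case: (boolP (v \in w :: p)) => Hv; last by left; split => //; exists p.
right; split; first by rewrite esym.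
case/and3P: Hp => Pp /eqP Lp Up.
have vw : v != w by apply/negP => /eqP E; move: evw; rewrite E eirr.
move: Hv Pp Lp Up; rewrite inE (negbTE vw) /= => /splitPr [p1 p2].
rewrite cat_path last_cat /= => /andP [_ /andP [_ P2]] L /andP [U1 U].
exists p2; split.
  apply/and3P; split => //; first by rewrite L.
  by move: U; rewrite cat_uniq => /and3P [_ _].
by move: U1; rewrite mem_cat negb_or => /andP [_].
Qed.

Lemma upath_cons v w p r : e v w -> upath w p r -> v \notin w :: p -> upath v (w :: p) r.
Proof. by move=> evw /and3P [P L U] N; apply/and3P; split => //=; apply/andP. Qed.

Lemma Tsub_upath (A : {set T}) r v p : upath v p r ->
  (v \in Tsub e A r) = ~~ has (mem A) (v :: p).
Proof.
move=> Hp; rewrite inE; congr negb; apply/asboolP/hasP.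
- case=> a [aA [q /and4P [Pq Lq Uq aq]]].
  have Hq : upath v q r by apply/and3P.
  have E := upath_uniq Hq Hp.
  by exists a; rewrite -?E.
- case=> a ap aA; exists a; split => //; exists p.
  by case/and3P: Hp => P L U; apply/and4P.
Qed.

Lemma Tsub_root (A : {set T}) r : r \notin A -> r \in Tsub e A r.
Proof.
move=> rA; have H : upath r [::] r by rewrite /upath /= eqxx.
by rewrite (Tsub_upath A H) /= orbF.
Qed.

Lemma Tsub_notA (A : {set T}) r a : a \in A -> a \notin Tsub e A r.
Proof.
move=> aA; case: (upath_ex a r) => p Hp.
by rewrite (Tsub_upath A Hp) negbK /= aA.
Qed.

Lemma Tsub_bd (A : {set T}) r v w : v \in Tsub e A r -> e v w ->
  w \notin Tsub e A r -> w \in A.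
Proof.
move=> vS evw wS; case: (Par_edge r evw) => [[_ [p [Hp N]]]|[ewv [p [Hp N]]]].
  have Hv := upath_cons evw Hp N.
  move: vS wS; rewrite (Tsub_upath A Hv) (Tsub_upath A Hp) negbK => H1 H2.
  by move: H1; rewrite (@has_cat _ _ [:: v] (w :: p)) H2 orbT.
have Hw := upath_cons ewv Hp N.
have H1 : ~~ has (mem A) (v :: p) by rewrite -(Tsub_upath A Hp).
move: wS; rewrite (Tsub_upath A Hw) negbK => H2.
move: H2; rewrite (@has_cat _ _ [:: w] (v :: p)) => /orP [|H2].
  by rewrite /= orbF.
by rewrite H2 in H1.
Qed.

End Tree.

Section Basic.
Variables (T : finType) (e : rel T).

Lemma domP (S D : {set T}) : reflect (D \subset S /\ forall v, v \in S -> v \in D \/ exists2 u, u \in D & e u v) (dominating e S D).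
Proof.
apply: (iffP andP) => [[H1 /forall_inP H2]|[H1 H2]]; split => //.
  move=> v /H2 /orP [->|/exists_inP [u uD euv]]; [by left|by right; exists u].
apply/forall_inP => v /H2 [->//|[u uD euv]]; apply/orP; right; apply/exists_inP; by exists u.
Qed.

Lemma ndomP (S D : {set T}) : D \subset S -> ~~ dominating e S D ->
  exists2 v, v \in S & v \notin D /\ forall u, u \in D -> ~~ e u v.
Proof.
move=> H1; rewrite /dominating H1 /= => /forall_inPn [v vS].
rewrite negb_or => /andP [vD /exists_inPn H]; exists v => //; split => //.
Qed.

Lemma mindomP (S D : {set T}) : reflect (dominating e S D /\ forall u, u \in D -> ~~ dominating e S (D :\ u)) (minimal_dominating e S D).
Proof.
apply: (iffP andP) => [[H1 /forallP H2]|[H1 H2]]; split => //.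
  move=> u uD; move: (H2 (D :\ u)); by rewrite properD1.
apply/forallP => D'; apply/implyP => /properP [sub [u uD uD']].
apply/negP => H; move/negP: (H2 u uD); apply.
case/domP: H => HS H; apply/domP; split.
  apply: subset_trans (subsetDl D [set u]) _; by case/domP: H1.
move=> v /H [vD'|[w wD' ewv]].
  left; rewrite !inE (subsetP sub _ vD') andbT; apply/negP => /eqP E; by rewrite -E vD' in uD'.
right; exists w => //; rewrite !inE (subsetP sub _ wD') andbT; apply/negP => /eqP E; by rewrite -E wD' in uD'.
Qed.


Lemma cnbhdE u w : (w \in cnbhd e u) = (w == u) || e u w.
Proof. by rewrite inE. Qed.

Lemma N1E (S D : {set T}) u : (u \in N1 e S D) = [&& u \in S, u \notin D & #|cnbhd e u :&: D| == 1].
Proof. by rewrite !inE; case: (u \in S); case: (u \in D). Qed.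

Lemma N1_eq (S D : {set T}) u z1 z2 : u \in N1 e S D ->
  z1 \in D -> z1 \in cnbhd e u -> z2 \in D -> z2 \in cnbhd e u -> z1 = z2.
Proof.
rewrite N1E => /and3P [_ _ /cards1P [a Ha]] z1D z1N z2D z2N.
have : z1 \in cnbhd e u :&: D by rewrite inE z1N.
have : z2 \in cnbhd e u :&: D by rewrite inE z2N.
by rewrite Ha !inE => /eqP -> /eqP ->.
Qed.

Lemma N1_intro (S D : {set T}) u a : u \in S -> u \notin D -> a \in D -> a \in cnbhd e u ->
  (forall z, z \in D -> z \in cnbhd e u -> z = a) -> u \in N1 e S D.
Proof.
move=> uS uD aD aN H; rewrite N1E uS uD /=.
apply/cards1P; exists a; apply/setP => z; rewrite !inE.
apply/idP/idP => [/andP [zN zD]|/eqP ->]; last by rewrite aD -cnbhdE aN.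
by rewrite (H z zD) // cnbhdE.
Qed.

End Basic.

Section Main.
Variables (T : finType) (e : rel T) (M X : {set T}).
Hypothesis esym : symmetric e.
Hypothesis eirr : irreflexive e.
Hypothesis econn : connected_graph e.
Hypothesis eacyc : acyclic e.
Hypothesis Mmin : minimal_dominating e setT M.
Hypothesis XN2 : X \subset N2 e setT M.
Hypothesis Ucon : induced_connected e (alg2_A2 e M X :|: X).
Hypothesis Xind : independent e X.

Local Notation A := (alg2_A e M X).
Local Notation A2 := (alg2_A2 e M X).
Local Notation NN := (alg2_N e M X).
Local Notation init := (alg2_init e M X).
Local Notation R x := (Tsub e (alg2_A2 e M X) x).

Let PE := Par_edge esym eirr econn.
Let PU := Par_uniq esym eacyc.
Let TU := Tsub_upath esym eacyc.
Let UU := upath_uniq esym eacyc.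
Let UE := upath_ex econn.
Let JN := join esym.
Let TB := Tsub_bd esym eirr econn eacyc.
Let TN := Tsub_notA esym econn eacyc.
Let TR := Tsub_root esym eacyc.

Lemma eneq u v : e u v -> u != v.
Proof. by move=> H; apply/negP => /eqP E; move: H; rewrite E eirr. Qed.

Lemma Mdom : dominating e setT M.
Proof. by case/mindomP: Mmin. Qed.

Lemma Mdom' v : v \in M \/ exists2 u, u \in M & e u v.
Proof. by case/domP: Mdom => _ /(_ v); apply; rewrite inE. Qed.

Lemma critM : crit e setT M = M.
Proof.
apply/setP => u; rewrite inE; apply/andP/idP => [[]//|uM]; split => //.
by case/mindomP: Mmin => _; apply.
Qed.

Lemma priv u : u \in M -> exists w, (w = u \/ e u w) /\
  forall z, z \in M -> z != u -> z != w /\ ~~ e z w.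
Proof.
move=> uM; case/mindomP: Mmin => _ /(_ u uM) H.
have [v _ [vD vN]] := ndomP (subsetT _) H.
exists v; split.
  case: (Mdom' v) => [vM|[z zM ezv]].
    by left; case: (eqVneq v u) => // vu; move: vD; rewrite !inE vu vM.
  case: (eqVneq z u) => [<-|zu]; first by right.
  by have := vN z; rewrite !inE zu zM ezv => /(_ isT).
move=> z zM zu; split.
  by apply/negP => /eqP E; move: vD; rewrite -E !inE zu zM.
by apply: vN; rewrite !inE zu zM.
Qed.

Lemma XnM x : x \in X -> x \notin M.
Proof. by move/(subsetP XN2); rewrite !inE => /andP [/andP [] ]. Qed.

Lemma XN2' x : x \in X -> x \notin N1 e setT M.
Proof.
move/(subsetP XN2); rewrite !inE => /andP [_ H]; apply/negP => /andP [_ /eqP H'].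
by rewrite H' in H.
Qed.

Lemma inA a : (a \in A) = [exists x in X, e x a] && (a \in M).
Proof. by rewrite /alg2_A critM !inE. Qed.

Lemma inA2 a : a \in A2 -> [/\ a \in A, a \in M & [disjoint cnbhd e a & N1 e setT M]].
Proof.
rewrite inA /alg2_A2 in_setI => /andP [H1 H]; move: H1 H.
rewrite !inE => H1 /andP [/andP [H2 _] H3].
by rewrite H1 H2 H3.
Qed.

Lemma A2M a : a \in A2 -> a \in M.
Proof. by case/inA2. Qed.

Lemma AM a : a \in A -> a \in M.
Proof. by rewrite inA => /andP []. Qed.

Lemma inN p : p \in NN -> p \in N1 e setT M /\ exists2 a, a \in A & e a p.
Proof.
rewrite /alg2_N !inE => /andP [/exists_inP [a aA eap] H]; split => //; by exists a.
Qed.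

Lemma N1nM (S D : {set T}) p : p \in N1 e S D -> p \notin D.
Proof. by rewrite N1E => /and3P []. Qed.

Lemma inInit v : v \in init = ((v \in M) || (v \in X)) && (v \notin A) || (v \in NN).
Proof. by rewrite /alg2_init !inE andbC. Qed.

Lemma Rroot x : x \in X -> x \in R x.
Proof. by move=> xX; apply: TR; apply/negP => /A2M; apply/negP; apply: XnM. Qed.

Lemma Rbd x v w : v \in R x -> e v w -> w \notin M -> w \in R x.
Proof.
move=> vR evw wM; apply/negPn/negP => wR.
by move/negP: wM; apply; apply: A2M; apply: (TB vR evw wR).
Qed.

Lemma RA2 x a : a \in A2 -> a \notin R x.
Proof. by move=> aA; apply: TN. Qed.

Lemma Upath x x' : x \in X -> x' \in X -> x != x' ->
  exists y q, upath e x (y :: q) x' /\ y \in A2 /\ {subset y :: q <= A2 :|: X}.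
Proof.
move=> xX x'X ne.
have xU : x \in A2 :|: X by rewrite inE xX orbT.
have x'U : x' \in A2 :|: X by rewrite inE x'X orbT.
have [[|y q] [Hq qU]] := upath_in Ucon xU x'U.
  by case/and3P: Hq => _ /= /eqP E; rewrite E eqxx in ne.
exists y, q; split => //; split => //.
have := qU y; rewrite inE inE eqxx /= => /(_ isT) /orP [//|yX].
case/and3P: Hq => /= /andP [exy _] _ _.
by move: (Xind xX yX); rewrite exy.
Qed.

Lemma RX x x' : x \in X -> x' \in X -> x' \in R x -> x' = x.
Proof.
move=> xX x'X x'R; apply/eqP/negPn/negP => ne.
have [y [q [Hq [yA _]]]] := Upath x'X xX ne.
by move: x'R; rewrite (TU _ Hq) /= inE yA orbT.
Qed.

Lemma Rdisj x x' v : x \in X -> x' \in X -> v \in R x -> v \in R x' -> x = x'.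
Proof.
move=> xX x'X vR vR'; apply/eqP/negPn/negP => ne.
have [p Hp] := UE v x; have [q Hq] := UE v x'.
case/and3P: (Hp) => Pp /eqP Lp _; case/and3P: (Hq) => Pq /eqP Lq _.
have [s [Hs Ssub]] := JN Pp Pq; rewrite Lp Lq in Hs.
have [y [q' [Hq' [yA _]]]] := Upath xX x'X ne.
have E := UU Hs Hq'.
have : y \in v :: p ++ q by apply: Ssub; rewrite E inE eqxx.
rewrite inE mem_cat => /or3P [/eqP Ey|yp|yq].
- by move: vR; rewrite (TU _ Hp) -Ey; move/negP; apply; apply/hasP; exists y => //; rewrite inE eqxx.
- by move: vR; rewrite (TU _ Hp); move/negP; apply; apply/hasP; exists y => //; rewrite inE yp orbT.
- by move: vR'; rewrite (TU _ Hq); move/negP; apply; apply/hasP; exists y => //; rewrite inE yq orbT.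
Qed.

Lemma Xnb x v x' : x \in X -> v \in R x -> x' \in X -> e v x' -> x' = x.
Proof.
move=> xX vR x'X evx; apply: (RX xX x'X); apply: Rbd vR evx _; exact: XnM.
Qed.


Lemma inj_ex (AS BS : {set T}) (P : T -> T -> bool) :
  (forall a, a \in AS -> exists v, (v \in BS) && P a v) ->
  (forall a a' v, a \in AS -> a' \in AS -> P a v -> P a' v -> a = a') -> #|AS| <= #|BS|.
Proof.
move=> Hex Hinj.
pose f a := odflt a [pick v | (v \in BS) && P a v].
have Hf a : a \in AS -> (f a \in BS) && P a (f a).
  move=> aA; rewrite /f; case: pickP => [v //|H].
  by have [v Hv] := Hex a aA; rewrite H in Hv.
have inj : {in AS &, injective f}.
  move=> a a' aA a'A E; have /andP [_ H1] := Hf a aA; have /andP [_ H2] := Hf a' a'A.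
  rewrite E in H1; exact: Hinj H1 H2.
rewrite -(card_in_imset inj); apply: subset_leq_card; apply/subsetP => y /imsetP [a aA ->].
by case/andP: (Hf a aA).
Qed.

Lemma initA2 a : a \in A2 -> a \notin init.
Proof.
move=> aA; have [aA' aM _] := inA2 aA.
rewrite inInit aA' andbF /=; apply/negP => /inN [/N1nM]; by rewrite aM.
Qed.

Lemma initE z : z \in init -> [\/ (z \in M) && (z \notin A), (z \in X) && (z \notin A) | z \in NN].
Proof.
rewrite inInit => /orP [/andP [/orP [zM|zX] zA]|zN].
- by apply: Or31; rewrite zM zA.
- by apply: Or32; rewrite zX zA.
- by apply: Or33.
Qed.

Lemma XA x : x \in X -> x \notin A.
Proof. by move=> xX; apply/negP => /AM; apply/negP; apply: XnM. Qed.

Lemma Xinit x : x \in X -> x \in init.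
Proof. by move=> xX; rewrite inInit xX orbT XA. Qed.

Lemma G_dom t : t \in init \/ exists2 m, m \in init & e m t.
Proof.
case: (boolP (t \in M)) => tM.
  case: (boolP (t \in A)) => tA; last by left; rewrite inInit tM tA.
  move: tA; rewrite inA => /andP [/exists_inP [x' x'X ex't] _].
  by right; exists x' => //; apply: Xinit.
case: (Mdom' t) => [H|[m mM emt]]; first by rewrite H in tM.
case: (boolP (m \in A)) => mA; last by right; exists m => //; rewrite inInit mM mA.
case: (boolP (t \in X)) => tX; first by left; apply: Xinit.
case: (boolP [exists z in M, (z \in cnbhd e t) && (z != m)]); last first.
  move=> /exists_inPn H; left; rewrite inInit; apply/orP; right.
  rewrite /alg2_N inE; apply/andP; split; first by rewrite inE; apply/exists_inP; exists m.
  apply: (N1_intro (in_setT t) tM mM).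
    by rewrite cnbhdE esym emt orbT.
  move=> z zM zN; have := H z zM; rewrite zN /= negbK => /eqP //.
case/exists_inP => m' m'M /andP [m'N m'm].
have etm' : e t m'.
  move: m'N; rewrite cnbhdE => /orP [/eqP E|//]; by subst m'; rewrite m'M in tM.
case: (boolP (m' \in A)) => m'A; last by right; exists m'; [rewrite inInit m'M m'A|rewrite esym].
exfalso.
move: mA m'A; rewrite !inA => /andP [/exists_inP [x1 x1X ex1m] _] /andP [/exists_inP [x2 x2X ex2m'] _].
have x1M := XnM x1X; have x2M := XnM x2X.
case: (eqVneq x1 x2) => [E|ne].
  subst x2.
  have Pm : Par e x1 m x1.
    case: (PE x1 ex1m) => [P|//]; by case: (Par_root P).
  have Pm' : Par e x1 m' x1.
    case: (PE x1 ex2m') => [P|//]; by case: (Par_root P).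
  have Ptm : Par e x1 t m.
    case: (PE x1 emt) => // P; have E := PU P Pm; subst t; by rewrite x1X in tX.
  have Ptm' : Par e x1 t m'.
    case: (PE x1 etm') => [//|P]; have E := PU P Pm'; subst t; by rewrite x1X in tX.
  by have E := PU Ptm Ptm'; rewrite E eqxx in m'm.
have [y [q [Hq [_ Hsub]]]] := Upath x1X x2X ne.
have Hq2 : upath e x1 [:: m; t; m'; x2] x2.
  have em'x2 : e m' x2 by rewrite esym.
  rewrite /upath /= ex1m emt etm' em'x2 eqxx /=.
  rewrite !inE !negb_or.
  have n1 : x1 != m by apply/negP => /eqP E; subst; rewrite mM in x1M.
  have n2 : x1 != t by apply/negP => /eqP E; subst; rewrite x1X in tX.
  have n3 : x1 != m' by apply/negP => /eqP E; subst; rewrite m'M in x1M.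
  have n4 : m != t by apply/negP => /eqP E; subst; rewrite mM in tM.
  have n5 : m != x2 by apply/negP => /eqP E; subst; rewrite mM in x2M.
  have n6 : t != m' by apply/negP => /eqP E; subst; rewrite m'M in tM.
  have n7 : t != x2 by apply/negP => /eqP E; subst; rewrite x2X in tX.
  have n8 : m' != x2 by apply/negP => /eqP E; subst; rewrite m'M in x2M.
  by rewrite n1 n2 n3 ne n4 n5 n6 n7 n8 eq_sym m'm.
have E := UU Hq Hq2.
have : t \in A2 :|: X by apply: Hsub; rewrite E !inE eqxx orbT.
rewrite inE (negbTE tX) orbF => /A2M; by rewrite (negbTE tM).
Qed.

Section Alg1.
Variable x : T.
Hypothesis xX : x \in X.

Local Notation S := (R x).

Definition INV (Mi : {set T}) : Prop :=
 [/\ dominating e S Mi, x \in Mi,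
   (forall y, y \in Mi -> y \notin M -> (forall z, z \in Mi -> ~~ e y z) /\
        (y = x \/ exists2 m, Par e x y m & m \in M))
 & (forall r m1 m2, r \in M -> r \in S -> r \notin Mi -> Par e x r m1 -> m1 \in M ->
        Par e x m1 m2 -> m2 \in M -> False)].

Lemma Par_x z : ~ Par e x x z.
Proof. exact: Par_root. Qed.

Lemma key Mi u : INV Mi -> u \in supported e S Mi ->
  [/\ u \in M, exists2 w, Par e x u w & w \notin M, exists2 a0, a0 \in Mi & e a0 u
   & forall a, a \in Mi -> e a u -> [/\ a \in M, Par e x a u & a \in a1 e S Mi]].
Proof.
case=> Hdom xMi Hnew Hrem Hu.
have [uMi Hdu] : u \in Mi /\ dominating e S (Mi :\ u).
  by move: Hu; rewrite !inE => /andP [H1 H2]; rewrite H2 /= negbK in H1.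
have MiS : Mi \subset S by case/domP: Hdom.
have uS : u \in S by apply: (subsetP MiS).
case/domP: Hdu => _ Hdu.
have [a0 a0Mi ea0u] : exists2 a0, a0 \in Mi & e a0 u.
  case: (Hdu u uS) => [|[a0]]; first by rewrite !inE eqxx.
  by rewrite !inE => /andP [_ ?] ?; exists a0.
have nbM a : a \in Mi -> e a u -> a \in M.
  move=> aMi eau; apply/negPn/negP => aM; case: (Hnew a aMi aM) => H _.
  by move: (H u uMi); rewrite eau.
have uM : u \in M.
  apply/negPn/negP => uM; case: (Hnew u uMi uM) => H _.
  by move: (H a0 a0Mi); rewrite esym ea0u.
have a0M := nbM a0 a0Mi ea0u.
have [w [Hw Hwp]] := priv uM.
have euw : e u w.
  case: Hw => [wu|//]; subst w.
  by have [_ H] := Hwp a0 a0M (eneq ea0u); rewrite ea0u in H.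
have wM : w \notin M.
  apply/negP => wM; have wu : w != u by rewrite eq_sym (eneq euw).
  by have [H _] := Hwp w wM wu; rewrite eqxx in H.
have wS : w \in S := Rbd uS euw wM.
have [y yMi eyw] : exists2 y, y \in Mi & y != u /\ e y w.
  case: (Hdu w wS) => [|[y]].
    rewrite !inE => /andP [_ wMi]; case: (Hnew w wMi wM) => H _.
    by move: (H u uMi); rewrite esym euw.
  by rewrite !inE => /andP [yu yMi] eyw; exists y.
case: eyw => yu eyw.
have yM : y \notin M.
  apply/negP => yM; have [_ H] := Hwp y yM yu; by rewrite eyw in H.
have Pwy : Par e x w y.
  case: (PE x eyw) => // Pyw.
  case: (Hnew y yMi yM) => _ [yx|[m Pym mM]].
    by subst y; case: (Par_x Pyw).
  by have E := PU Pyw Pym; subst m; rewrite mM in wM.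
have Puw : Par e x u w.
  case: (PE x euw) => // Pwu.
  have E := PU Pwu Pwy; subst y; by rewrite uM in yM.
split => //; first by exists w.
  by exists a0.
move=> a aMi eau; have aM := nbM a aMi eau.
have Pau : Par e x a u.
  case: (PE x eau) => // Pua.
  have E := PU Pua Puw; subst a; by rewrite aM in wM.
split => //.
have aS : a \in S by apply: (subsetP MiS).
have [wa [Hwa Hwap]] := priv aM.
have ua : u != a by rewrite eq_sym; apply: eneq.
have eawa : e a wa.
  case: Hwa => [E|//]; subst wa.
  by have [_ H] := Hwap u uM ua; rewrite esym eau in H.
have waM : wa \notin M.
  apply/negP => waM; have wu : wa != a by rewrite eq_sym (eneq eawa).
  by have [H _] := Hwap wa waM wu; rewrite eqxx in H.
have waS : wa \in S := Rbd aS eawa waM.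
have Pwa : Par e x wa a.
  case: (PE x eawa) => // Pawa.
  have E := PU Pawa Pau; subst wa; by rewrite uM in waM.
have waMi : wa \notin Mi.
  apply/negP => waMi; case: (Hnew wa waMi waM) => H _.
  by move: (H a aMi); rewrite esym eawa.
have Hz z : z \in Mi -> z \in cnbhd e wa -> z = a.
  move=> zMi; rewrite cnbhdE => /orP [/eqP E|ewaz].
    by subst z; rewrite zMi in waMi.
  case: (boolP (z \in M)) => zM.
    apply/eqP/negPn/negP => za; have [_ H] := Hwap z zM za.
    by rewrite esym ewaz in H.
  case: (Hnew z zMi zM) => _ Hzp.
  case: (PE x ewaz) => Pz.
    have E := PU Pz Pwa; subst z; by rewrite aM in zM.
  case: Hzp => [E|[m Pzm mM]].
    by subst z; case: (Par_x Pz).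
  have E := PU Pz Pzm; subst m; by rewrite mM in waM.
have waN1 : wa \in N1 e S Mi.
  apply: (N1_intro waS waMi aMi) => //; by rewrite cnbhdE esym eawa orbT.
rewrite !inE aMi /=; apply/andP; split.
  apply/negP => /domP [_ H]; case: (H wa waS) => [|[z]].
    by rewrite !inE (negbTE waMi) andbF.
  rewrite !inE => /andP [za zMi] ezwa.
  have := Hz z zMi; rewrite cnbhdE esym ezwa orbT => /(_ isT) E.
  by rewrite E eqxx in za.
by apply/exists_inP; exists wa => //; rewrite cnbhdE eawa orbT.
Qed.


Definition AA Mi u := [set a in a1 e S Mi | e a u].
Definition NNn Mi u := [set v in N1 e S Mi | [exists a in AA Mi u, e a v]].
Definition stepM Mi u := (Mi :\: AA Mi u) :|: NNn Mi u.

Lemma a1_crit (D : {set T}) a : a \in a1 e S D -> a \in D.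
Proof. by rewrite !inE => /andP [/andP [] ]. Qed.

Lemma step_inv Mi u : INV Mi -> u \in supported e S Mi ->
  [/\ INV (stepM Mi u), #|M :&: stepM Mi u| < #|M :&: Mi| & #|Mi| <= #|stepM Mi u|].
Proof.
move=> Hinv Hu; have [uM [w Puw wM] [a0 a0Mi ea0u] Hall] := key Hinv Hu.
case: Hinv => Hdom xMi Hnew Hrem.
have MiS : Mi \subset S by case/domP: Hdom.
have uMi : u \in Mi by move: Hu; rewrite !inE => /andP [].
have inAA a : a \in AA Mi u -> [/\ a \in Mi, a \in M & Par e x a u].
  rewrite !inE => /andP [H eau]; have aMi : a \in Mi by apply: a1_crit; rewrite !inE.
  by have [? ? _] := Hall a aMi eau.
have a0A : a0 \in AA Mi u.
  by have [_ _ H] := Hall a0 a0Mi ea0u; rewrite inE H ea0u.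
have uA : u \notin AA Mi u by rewrite !inE eirr andbF.
have inNN v : v \in NNn Mi u -> exists a, [/\ v \in N1 e S Mi, a \in AA Mi u, e a v, v \in S & v \notin Mi] /\
    [/\ Par e x v a, v \notin M & forall z, z \in Mi -> z \in cnbhd e v -> z = a].
  rewrite inE => /andP [vN /exists_inP [a aA eav]]; exists a.
  have [aMi aM Pau] := inAA a aA.
  have vS : v \in S by move: vN; rewrite N1E => /and3P [].
  have vMi := N1nM vN.
  have Pva : Par e x v a.
    case: (PE x eav) => // Pav; have E := PU Pav Pau; subst v; by rewrite uMi in vMi.
  split => //; split => //.
    apply/negP => vM; exact: (Hrem v a u vM vS vMi Pva aM Pau uM).
  move=> z zMi zN; apply: (N1_eq vN) => //; by rewrite cnbhdE esym eav orbT.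
have inStep z : (z \in stepM Mi u) = ((z \in Mi) && (z \notin AA Mi u)) || (z \in NNn Mi u).
  by rewrite /stepM !inE andbC.
have NNMi v : v \in NNn Mi u -> v \notin Mi.
  by move/inNN => [a [[_ _ _ _ ->] _]].
split.
- split.
  + apply/domP; split.
      apply/subsetP => z; rewrite inStep => /orP [/andP [zMi _]|/inNN [a [[_ _ _ zS _] _]]] //.
      exact: (subsetP MiS).
    move=> t tS; case/domP: Hdom => _ /(_ t tS) [tMi|[m mMi emt]].
      case: (boolP (t \in AA Mi u)) => tA.
        by right; exists u; [rewrite inStep uMi uA | have [_ _ /proj1 H] := inAA t tA; rewrite esym].
      by left; rewrite inStep tMi tA.
    case: (boolP (t \in Mi)) => tMi.
      case: (boolP (t \in AA Mi u)) => tA.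
        by right; exists u; [rewrite inStep uMi uA | have [_ _ /proj1 H] := inAA t tA; rewrite esym].
      by left; rewrite inStep tMi tA.
    case: (boolP (m \in AA Mi u)) => mA; last by right; exists m => //; rewrite inStep mMi mA.
    case: (boolP [exists z in Mi, (z \in cnbhd e t) && (z != m)]).
      case/exists_inP => m' m'Mi /andP [m'N m'm].
      have etm' : e t m'.
        move: m'N; rewrite cnbhdE => /orP [/eqP E|//]; by subst m'; rewrite m'Mi in tMi.
      case: (boolP (m' \in AA Mi u)) => m'A; last first.
        by right; exists m' => //; [rewrite inStep m'Mi m'A | rewrite esym].
      have [_ _ Pmu] := inAA m mA; have [_ _ Pm'u] := inAA m' m'A.
      have Ptm : Par e x t m.
        case: (PE x emt) => // Pmt; have E := PU Pmt Pmu; subst t; by rewrite uMi in tMi.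
      have Ptm' : Par e x t m'.
        case: (PE x etm') => [//|Pm't]; have E := PU Pm't Pm'u; subst t; by rewrite uMi in tMi.
      by have E := PU Ptm Ptm'; rewrite E eqxx in m'm.
    move=> /exists_inPn H; left; rewrite inStep; apply/orP; right.
    rewrite inE; apply/andP; split; last by apply/exists_inP; exists m.
    apply: (N1_intro tS tMi mMi); first by rewrite cnbhdE esym emt orbT.
    move=> z zMi zN; have := H z zMi; rewrite zN /= negbK => /eqP //.
  + rewrite inStep xMi /=; apply/orP; left; apply/negP => /inAA [_ xM _].
    by move: (XnM xX); rewrite xM.
  + move=> y; rewrite inStep => /orP [/andP [yMi yA]|yN] yM.
      case: (Hnew y yMi yM) => Hnb Hpar; split => // z.
      rewrite inStep => /orP [/andP [zMi _]|zN]; first exact: Hnb.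
      have [a [[_ aA _ _ _] [_ _ Hz]]] := inNN z zN.
      apply/negP => eyz; have E := Hz y yMi; rewrite cnbhdE esym eyz orbT in E.
      by rewrite (E isT) aA in yA.
    have [a [[_ aA _ _ yMi] [Pya _ Hz]]] := inNN y yN.
    have [aMi aM _] := inAA a aA.
    split; last by right; exists a.
    move=> z; rewrite inStep => /orP [/andP [zMi zA]|zN].
      apply/negP => eyz; have E := Hz z zMi; rewrite cnbhdE eyz orbT in E.
      by rewrite (E isT) aA in zA.
    have [b [[_ bA _ _ zMi] [Pzb _ _]]] := inNN z zN.
    have [bMi _ _] := inAA b bA.
    apply/negP => eyz; case: (PE x eyz) => P.
      by have E := PU P Pya; subst z; rewrite aMi in zMi.
    by have E := PU P Pzb; subst y; rewrite bMi in yMi.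
  + move=> r m1 m2 rM rS; rewrite inStep negb_or => /andP [H1 _].
    case: (boolP (r \in Mi)) => rMi; last exact: Hrem.
    rewrite rMi /= negbK in H1; have [_ _ Pru] := inAA r H1.
    move=> P1 m1M P2 m2M; have E := PU P1 Pru; subst m1.
    by have E := PU P2 Puw; subst m2; rewrite m2M in wM.
- apply: proper_card; apply/properP; split.
    apply/subsetP => z; rewrite in_setI => /andP [zM].
    rewrite inStep => /orP [/andP [zMi _]|/inNN [a [_ [_ zM' _]]]]; first by rewrite in_setI zM zMi.
    by rewrite zM in zM'.
  exists a0; first by have [? ? _] := inAA a0 a0A; rewrite in_setI; apply/andP.
  rewrite in_setI inStep a0A andbF /= negb_and; apply/orP; right.
  by apply/negP => /NNMi; rewrite a0Mi.
- have Hdisj : [disjoint Mi :\: AA Mi u & NNn Mi u].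
    apply/pred0P => z /=; apply/negP => /andP [/setDP [zMi _] /NNMi]; by rewrite zMi.
  rewrite /stepM cardsU (disjoint_setI0 Hdisj) cards0 subn0.
  have sub : AA Mi u \subset Mi by apply/subsetP => a /inAA [].
  rewrite cardsD (setIidPr sub).
  have le : #|AA Mi u| <= #|NNn Mi u|.
    apply: (inj_ex (P := fun a v => (v \in N1 e S Mi) && e a v)).
      move=> a aA; have [aMi _ _] := inAA a aA.
      move: (aA); rewrite !inE => /andP [/andP [_ /exists_inP [v vN vc]] eau].
      have vMi := N1nM vN.
      have eav : e a v.
        move: vc; rewrite cnbhdE => /orP [/eqP E|//]; by subst v; rewrite aMi in vMi.
      exists v; rewrite vN eav /= andbT inE vN /=; apply/exists_inP; by exists a.
    move=> a a' v aA a'A /andP [vN eav] /andP [_ ea'v].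
    have [aMi _ _] := inAA a aA; have [a'Mi _ _] := inAA a' a'A.
    apply: (N1_eq vN) => //; by rewrite cnbhdE esym ?eav ?ea'v orbT.
  have le2 : #|AA Mi u| <= #|Mi| by apply: subset_leq_card.
  by rewrite -{1}(subnK le2) leq_add2l.
Qed.


Lemma Ainfo a : a \in A -> a \in S -> e x a /\ Par e x a x.
Proof.
rewrite inA => /andP [/exists_inP [x'' x''X ex''a] aM] aS.
have E := Xnb xX aS x''X (etrans (esym _ _) ex''a); subst x''.
split => //; case: (PE x ex''a) => [P|//]; by case: (Par_x P).
Qed.

Lemma NNinfo p : p \in NN -> p \in S -> exists a,
  [/\ a \in A, a \in M, e a p, Par e x p a & forall z, z \in M -> z \in cnbhd e p -> z = a].
Proof.
move=> pN pS; have [pN1 [a aA eap]] := inN pN.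
have aM := AM aA.
have aS : a \in S.
  apply/negPn/negP => aS; have aA2 := TB pS (etrans (esym _ _) eap) aS.
  have [_ _ /pred0P /(_ p) H] := inA2 aA2.
  by move: H; rewrite /= pN1 cnbhdE eap orbT.
have [exa Pax] := Ainfo aA aS.
exists a; split => //.
  case: (PE x eap) => [P|//]; have E := PU P Pax; subst p.
  by move: (XN2' xX); rewrite pN1.
move=> z zM zN; apply: (N1_eq pN1) => //; by rewrite cnbhdE esym eap orbT.
Qed.

Lemma init_inv : INV (init :&: S).
Proof.
split.
- apply/domP; split; first exact: subsetIr.
  move=> t tS; case: (G_dom t) => [ti|[m mi emt]].
    by left; rewrite in_setI ti.
  case: (boolP (m \in S)) => mS; first by right; exists m => //; rewrite in_setI mi.
  have mA2 := TB tS (etrans (esym _ _) emt) mS.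
  by move: (initA2 mA2); rewrite mi.
- by rewrite in_setI (Xinit xX) (Rroot xX).
- move=> y; rewrite in_setI => /andP [yi yS] yM.
  have Hz z : z \in init :&: S -> (z \in M) && (z \notin A) \/ z = x \/ (z \in NN /\ z \notin M).
    rewrite in_setI => /andP [zi zS]; case/initE: zi => [H|/andP [zX _]|zN].
    + by left.
    + by right; left; apply: RX.
    + right; right; split => //; by have [/N1nM] := inN zN.
  have := Hz y; rewrite in_setI yi yS => /(_ isT) [/andP [H _]|[yx|[yN _]]].
  + by rewrite H in yM.
  + subst y; split; last by left.
    move=> z /Hz [/andP [zM zA]|[zx|[zN zM]]].
    * by apply/negP => exz; move: zA; rewrite inA zM andbT; move/negP; apply; apply/exists_inP; exists x.
    * by subst z; rewrite eirr.
    * apply/negP => exz; have zS : z \in S by apply: Rbd (Rroot xX) exz zM.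
      have [a [_ aM _ Pza _]] := NNinfo zN zS.
      case: (PE x exz) => P; first by case: (Par_x P).
      have E := PU P Pza; by move: (XnM xX); rewrite E aM.
  + have [a [aA aM eay Pya Hpr]] := NNinfo yN yS.
    split; last by right; exists a.
    move=> z /Hz [/andP [zM zA]|[zx|[zN zM]]].
    * apply/negP => eyz; have E := Hpr z zM; rewrite cnbhdE eyz orbT in E.
      by rewrite (E isT) aA in zA.
    * subst z; apply/negP => eyx; case: (PE x eyx) => P; last by case: (Par_x P).
      have E := PU P Pya; by move: (XnM xX); rewrite E aM.
    * apply/negP => eyz; have zS : z \in S by apply: Rbd yS eyz zM.
      have [b [_ bM _ Pzb _]] := NNinfo zN zS.
      case: (PE x eyz) => P.
        by have E := PU P Pya; subst z; rewrite aM in zM.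
      by have E := PU P Pzb; subst y; rewrite bM in yM.
- move=> r m1 m2 rM rS; rewrite in_setI rS andbT => ri P1 m1M.
  have rA : r \in A by apply/negPn/negP => rA; move: ri; rewrite inInit rM rA.
  have [_ Prx] := Ainfo rA rS; have E := PU P1 Prx; subst m1.
  by move: (XnM xX); rewrite m1M.
Qed.

Lemma star_inv M1 M2 : star (alg1_step e S x) M1 M2 -> INV M1 -> INV M2 /\ #|M1| <= #|M2|.
Proof.
elim=> [M0 H|Ma Mb Mc [_ [u [uSup _ HM]]] _ IH Ha]; first by split.
have E : Mb = stepM Ma u by rewrite HM.
have [Hb _ le1] := step_inv Ha uSup.
rewrite -E in Hb le1; have [Hc le2] := IH Hb; split => //; exact: leq_trans le1 le2.
Qed.

Lemma alg1_ok : alg1_terminates e S x (init :&: S) /\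
  forall O, alg1_out e S x (init :&: S) O ->
    [/\ minimal_dominating e S O, x \in O & #|init :&: S| <= #|O|].
Proof.
split; first split.
- have H n : forall M1, INV M1 -> #|M :&: M1| < n -> Acc (fun b a => alg1_step e S x a b) M1.
    elim: n => [//|n IH] M1 H1 Hn; constructor => M2 [_ [u [uSup _ HM]]].
    have E : M2 = stepM M1 u by rewrite HM.
    have [H2 lt _] := step_inv H1 uSup; rewrite -E in H2 lt.
    apply: IH H2 _; exact: leq_trans lt _.
  exact: (H _ _ init_inv (ltnSn _)).
- move=> M1 Hs Hnm; have [H1 _] := star_inv Hs init_inv.
  have Hd : dominating e S M1 by case: H1.
  case: (boolP [exists u in M1, dominating e S (M1 :\ u)]); last first.
    move=> /exists_inPn Hn; move/negP: Hnm; case; apply/mindomP; split => //.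
  case/exists_inP => u0 u0M Hu0.
  have u0s : u0 \in supported e S M1.
    by rewrite !inE u0M Hu0.
  case: (arg_minnP (depth e S x) u0s) => u uSup Hmin.
  eexists; split => //; exists u; split => //.
- move=> O [Hs Hmin]; have [[_ xO _ _] le] := star_inv Hs init_inv; by split.
Qed.

End Alg1.


Lemma alg2_ind (s : seq T) : uniq s -> {subset s <= X} -> forall M',
  (forall x, x \in s -> M' :&: R x = init :&: R x) ->
  alg2_ok e A2 M' s /\ forall Mf, alg2_out e A2 M' s Mf ->
   [/\ forall x, x \in s -> minimal_dominating e (R x) (Mf :&: R x) /\ x \in Mf,
        forall v, (forall x, x \in s -> v \notin R x) -> (v \in Mf) = (v \in M')
      & #|M'| <= #|Mf|].
Proof.
elim: s => [|x s IH] /=.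
  move=> _ _ M' _; split => // Mf ->; by split.
move=> /andP [xs us] sub M' HM'.
have xX : x \in X by apply: sub; rewrite inE eqxx.
have sub' : {subset s <= X} by move=> z zs; apply: sub; rewrite inE zs orbT.
have E0 : M' :&: R x = init :&: R x by apply: HM'; rewrite inE eqxx.
have [Hterm Hout] := alg1_ok xX.
have disj v x' : x' \in s -> v \in R x -> v \notin R x'.
  move=> x's vR; apply/negP => vR'; have E := Rdisj xX (sub' _ x's) vR vR'.
  by subst x'; rewrite x's in xs.
have Hnext M'' : alg1_out e (R x) x (M' :&: R x) M'' ->
   [/\ minimal_dominating e (R x) M'', x \in M'', #|M' :&: R x| <= #|M''|,
      M'' \subset R x & forall x', x' \in s ->
        ((M' :\: (M' :&: R x)) :|: M'') :&: R x' = init :&: R x'].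
  move=> Ho; have Ho' : alg1_out e (R x) x (init :&: R x) M'' by rewrite -E0.
  case/Hout: Ho' => Hmin xM'' le; split => //.
    by rewrite E0.
    by case/mindomP: Hmin => /domP [].
  move=> x' x's; rewrite -(HM' x'); last by rewrite inE x's orbT.
  have Hsub : M'' \subset R x by case/mindomP: Hmin => /domP [].
  apply/setP => v; rewrite !in_setI in_setU in_setD in_setI.
  case: (boolP (v \in R x')) => vR'; rewrite ?andbF ?andbT //.
  have vR : v \notin R x by apply/negP => vR; move: (disj v x' x's vR); rewrite vR'.
  have vM'' : v \notin M'' by apply/negP => vM''; move: vR; rewrite (subsetP Hsub _ vM'').
  by rewrite (negbTE vR) (negbTE vM'') andbF /= orbF.
split.
  split; first by rewrite E0.
  move=> M'' /Hnext [_ _ _ _ H]; exact: (proj1 (IH us sub' _ H)).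
move=> Mf [M'' [Ho Hs]]; have [Hmin xM'' le Hsub H] := Hnext M'' Ho.
have [IH1 IH2 IH3] := (proj2 (IH us sub' _ H)) Mf Hs.
set M2 := (M' :\: (M' :&: R x)) :|: M'' in IH1 IH2 IH3 H.
have inM2 v : v \in R x -> (v \in M2) = (v \in M'').
  move=> vR; rewrite /M2 in_setU in_setD in_setI vR andbT.
  by case: (v \in M'); case: (v \in M'').
have inM2' v : v \notin R x -> (v \in M2) = (v \in M').
  move=> vR; rewrite /M2 in_setU in_setD in_setI (negbTE vR) andbF /=.
  case: (boolP (v \in M'')) => vM''; last by rewrite orbF.
  by move: vR; rewrite (subsetP Hsub _ vM'').
have EMf : Mf :&: R x = M''.
  apply/setP => v; rewrite in_setI; case: (boolP (v \in R x)) => vR.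
    rewrite andbT IH2 ?inM2 // => x' x's; exact: disj.
  rewrite andbF; case: (boolP (v \in M'')) => // vM''; by move: vR; rewrite (subsetP Hsub _ vM'').
split.
- move=> x'; rewrite inE => /orP [/eqP ->|x's]; last exact: IH1.
  rewrite EMf; split => //.
  have : x \in Mf :&: R x by rewrite EMf.
  by rewrite in_setI => /andP [].
- move=> v Hv; rewrite IH2; last by move=> x' x's; apply: Hv; rewrite inE x's orbT.
  apply: inM2'; apply: Hv; by rewrite inE eqxx.
- apply: leq_trans IH3; rewrite /M2 cardsU.
  have -> : (M' :\: (M' :&: R x)) :&: M'' = set0.
    apply/setP => v; rewrite in_setI in_setD in_setI in_set0.
    case: (boolP (v \in M'')) => vM''; rewrite ?andbF //.
    by rewrite (subsetP Hsub _ vM''); case: (v \in M').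
  rewrite cards0 subn0 cardsD setIA setIid.
  have le2 : #|M' :&: R x| <= #|M'| by apply: subset_leq_card; apply: subsetIl.
  lia.
Qed.


Lemma NNreg p : p \in NN -> exists2 x, x \in X & p \in R x.
Proof.
move=> pN; have [pN1 [a aA eap]] := inN pN.
move: (aA); rewrite inA => /andP [/exists_inP [x xX exa] aM].
have aR : a \in R x.
  apply/negPn/negP => aR; have aA2 := TB (Rroot xX) exa aR.
  have [_ _ /pred0P /(_ p) H] := inA2 aA2.
  by move: H; rewrite /= pN1 cnbhdE eap orbT.
exists x => //; apply: Rbd aR eap _; exact: N1nM pN1.
Qed.

Lemma init_noreg v : v \in init -> (forall x, x \in X -> v \notin R x) -> v \in M.
Proof.
move=> vi H; case/initE: vi => [/andP [//]|/andP [vX _]|vN].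
  by move: (H v vX); rewrite Rroot.
by have [x xX vR] := NNreg vN; move: (H x xX); rewrite vR.
Qed.

Lemma size_init : #|M| + #|X| <= #|init| + #|A2|.
Proof.
have d1 : ((M :|: X) :\: A) :&: NN = set0.
  apply/setP => v; rewrite in_set0; apply/negP => /setIP [/setDP [vMX _] vN].
  have [vN1 _] := inN vN; have vM := N1nM vN1.
  move: vMX; rewrite in_setU (negbTE vM) /= => vX.
  by move: (XN2' vX); rewrite vN1.
have d2 : M :&: X = set0.
  apply/setP => v; rewrite in_set0; apply/negP => /setIP [vM vX].
  by move: (XnM vX); rewrite vM.
have sA : A \subset M by apply/subsetP => a; apply: AM.
have sA2 : A2 \subset A by apply/subsetP => a /inA2 [].
have e1 : (M :|: X) :&: A = A.
  apply/setIidPr; apply: subset_trans sA _; exact: subsetUl.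
have le1 : #|A :\: A2| <= #|NN|.
  apply: (inj_ex (P := fun a p => (p \in N1 e setT M) && e a p)).
    move=> a; rewrite in_setD => /andP [aA2 aA].
    have aM := AM aA.
    have : ~~ [disjoint cnbhd e a & N1 e setT M].
      apply/negP => H; move/negP: aA2; apply.
      move: aA; rewrite /alg2_A /alg2_A2 !in_setI => /andP [-> aC].
      by rewrite /a2 in_set aC H.
    case/pred0Pn => p /= /andP [pN pN1].
    have pM := N1nM pN1.
    have eap : e a p.
      move: pN; rewrite cnbhdE => /orP [/eqP E|//]; by subst p; rewrite aM in pM.
    exists p; rewrite pN1 eap /= andbT /alg2_N in_setI pN1 andbT inE.
    by apply/exists_inP; exists a.
  move=> a a' p; rewrite !in_setD => /andP [_ aA] /andP [_ a'A] /andP [pN1 eap] /andP [_ ea'p].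
  apply: (N1_eq pN1); rewrite ?(AM aA) ?(AM a'A) // cnbhdE esym ?eap ?ea'p orbT //.
have leA : #|A| <= #|M| by apply: subset_leq_card.
have e2 : #|A :\: A2| = #|A| - #|A2| by rewrite cardsD (setIidPr sA2).
have leA2 : #|A2| <= #|A| by apply: subset_leq_card.
rewrite /alg2_init cardsU d1 cards0 subn0 cardsD e1 cardsU d2 cards0 subn0.
lia.
Qed.

Lemma final (s : seq T) : uniq s -> (forall v, (v \in s) = (v \in X)) ->
  alg2_ok e A2 init s /\ forall Mf, alg2_out e A2 init s Mf ->
    minimal_dominating e setT Mf /\ #|M| + #|X| <= #|Mf| + #|A2|.
Proof.
move=> us Hs.
have sub : {subset s <= X} by move=> v; rewrite Hs.
have [Hok Hout] := alg2_ind us sub (M' := init) (fun _ _ => erefl).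
split => // Mf /Hout [H1 H2 H3].
have H1' x : x \in X -> minimal_dominating e (R x) (Mf :&: R x) /\ x \in Mf.
  by move=> xX; apply: H1; rewrite Hs.
have H2' v : (forall x, x \in X -> v \notin R x) -> (v \in Mf) = (v \in init).
  by move=> H; apply: H2 => x; rewrite Hs; apply: H.
have A2Mf a : a \in A2 -> a \notin Mf.
  move=> aA; rewrite H2' ?initA2 // => x _; exact: RA2.
have MfR x v : x \in X -> v \in R x -> (v \in Mf :&: R x) = (v \in Mf).
  by move=> _ vR; rewrite in_setI vR andbT.
split; last first.
  apply: leq_trans size_init _; by rewrite leq_add2r.
apply/mindomP; split.
  apply/domP; split; first exact: subsetT.
  move=> t _; case: (boolP [exists x in X, t \in R x]).
    case/exists_inP => x xX tR; have [/mindomP [/domP [_ Hd] _] _] := H1' x xX.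
    case: (Hd t tR) => [|[m]]; first by rewrite in_setI => /andP [? _]; left.
    by rewrite in_setI => /andP [mMf _] emt; right; exists m.
  move=> /exists_inPn Hn.
  case: (G_dom t) => [ti|[m mi emt]]; first by left; rewrite H2'.
  case: (boolP [exists x in X, m \in R x]).
    case/exists_inP => x xX mR.
    have tR : t \notin R x by apply: Hn.
    have tA2 := TB mR emt tR.
    have [tA _ _] := inA2 tA2; move: tA; rewrite inA => /andP [/exists_inP [x' x'X ex't] _].
    by right; exists x' => //; have [_ ?] := H1' x' x'X.
  by move=> /exists_inPn Hm; right; exists m => //; rewrite H2'.
move=> m mMf.
suff [w [wn zn]] : exists w, w \notin Mf :\ m /\ forall z, z \in Mf :\ m -> ~~ e z w.
  apply/negP => /domP [_ /(_ w (in_setT w))] [|[z zM ezw]]; first by apply/negP.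
  by move: (zn z zM); rewrite ezw.
case: (boolP [exists x in X, m \in R x]).
  case/exists_inP => x xX mR; have [/mindomP [HdO HminO] _] := H1' x xX.
  have mO : m \in Mf :&: R x by rewrite in_setI mMf mR.
  have sub1 : (Mf :&: R x) :\ m \subset R x.
    apply: subset_trans (subsetDl _ _) _; exact: subsetIr.
  have [w wR [wn zn]] := ndomP sub1 (HminO m mO).
  exists w; split.
    apply/negP => wm; move/negP: wn; apply; move: wm; rewrite !in_setD1 in_setI wR andbT; by [].
  move=> z; rewrite in_setD1 => /andP [zm zMf]; case: (boolP (z \in R x)) => zR.
    by apply: zn; rewrite in_setD1 in_setI zm zMf zR.
  apply/negP => ezw; have zA2 := TB wR (etrans (esym _ _) ezw) zR.
  by move: (A2Mf z zA2); rewrite zMf.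
move=> /exists_inPn Hm.
have mM : m \in M by apply: init_noreg; rewrite -?H2' //.
have mnA2 : m \notin A2 by apply/negP => /A2Mf; rewrite mMf.
have [w [Hw Hwp]] := priv mM.
have regM v : v \in Mf -> v \notin M -> exists2 x, x \in X & v \in R x.
  move=> vMf vM; case: (boolP [exists x in X, v \in R x]).
    by case/exists_inP => x; exists x.
  move=> /exists_inPn Hv; move: vM; rewrite (init_noreg _ Hv) //; by rewrite -H2'.
exists w; split.
  rewrite in_setD1 negb_and negbK; case: (eqVneq w m) => //= wm.
  apply/negP => wMf.
  have ewm : e m w by case: Hw => // E; rewrite E eqxx in wm.
  have wM : w \notin M.
    apply/negP => wM; have [H _] := Hwp w wM wm; by rewrite eqxx in H.
  have [x xX wR] := regM w wMf wM.
  have mR : m \notin R x by apply: Hm.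
  by move: (TB wR (etrans (esym _ _) ewm) mR); rewrite (negbTE mnA2).
move=> z; rewrite in_setD1 => /andP [zm zMf]; apply/negP => ezw.
have zM : z \notin M.
  apply/negP => zM; have [_ H] := Hwp z zM zm; by rewrite ezw in H.
have [x xX zR] := regM z zMf zM.
case: (boolP (w \in R x)) => wR.
  case: Hw => [E|emw]; first by subst w; move: (Hm x xX); rewrite wR.
  have mR : m \notin R x by apply: Hm.
  by move: (TB wR (etrans (esym _ _) emw) mR); rewrite (negbTE mnA2).
have wA2 := TB zR ezw wR.
have wM := A2M wA2.
case: (eqVneq w m) => [E|wm]; first by subst w; rewrite wA2 in mnA2.
have [H _] := Hwp w wM wm; by rewrite eqxx in H.
Qed.

End Main.

Theorem theorem4p6 (T : finType) (e : rel T) (M X : {set T}) :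
  is_tree e ->
  minimal_dominating e setT M ->
  X \subset N2 e setT M ->
  induced_connected e (alg2_A2 e M X :|: X) ->
  independent e X ->
  forall s : seq T, uniq s -> (forall v, (v \in s) = (v \in X)) ->
    alg2_ok e (alg2_A2 e M X) (alg2_init e M X) s /\
    (forall Mf, alg2_out e (alg2_A2 e M X) (alg2_init e M X) s Mf ->
       minimal_dominating e setT Mf /\
       #|M| + #|X| <= #|Mf| + #|alg2_A2 e M X|).
Proof.
move=> [[esym eirr] econn eacyc] Mmin XN2 Ucon Xind s us Hs.
exact: (final esym eirr econn eacyc Mmin XN2 Ucon Xind us Hs).
Qed.
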